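(* Let $\mu_1,\dots,\mu_k$ be probability measures on $\mathbb{R}$ such that, for each $j$, $\lim_{t\to0}H((\mu_j)_t)/|\log t|$ exists. Let $\alpha_j\ge0$ with $\sum_j\alpha_j=1$. Then $$\delta_c\Big(\sum_j\alpha_j\mu_j\Big)=\sum_j\alpha_j\delta_c(\mu_j).$$
   Context: For $t>0$, $\nu_t$ is the centered Gaussian law on $\mathbb{R}$ with variance $t^2$, $\rho_t=\rho*\nu_t$ for a probability measure $\rho$, and $H(p\,dx)=\int p\log p\,dx$. Define $$\delta_c(\rho)=1-\liminf_{t\to0}\frac{H(\rho_t)}{|\log t|}.$$ *)

(* Defs.v *)
From HB Require Import structures.
From mathcomp Require Import all_boot all_order all_algebra.
From mathcomp Require Import all_classical all_reals all_analysis.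
Set Implicit Arguments. Unset Strict Implicit. Unset Printing Implicit Defensive.
Import Order.TTheory GRing.Theory Num.Theory.
Local Open Scope classical_set_scope.
Local Open Scope ring_scope.

(* Density of rho_t = rho * nu_t, nu_t = centered Gaussian of variance t^2:
   p_t(x) = \int phi_t(x - y) d rho(y). *)
Definition gauss_smooth_density {R : realType}
  (rho : probability R R) (t : R) (x : R) : R :=
  fine (\int[rho]_y (normal_pdf y t x)%:E)%E.

Definition entropyH {R : realType} (p : R -> R) : \bar R :=
  (\int[@lebesgue_measure R]_x (p x * ln (p x))%:E)%E.

Definition entropy_ratio {R : realType} (rho : probability R R) (t : R)
  : \bar R :=
  (entropyH (gauss_smooth_density rho t) * (`|ln t|^-1)%:E)%E.

Definition liminf_at0 {R : realType} (f : R -> \bar R) : \bar R :=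
  ereal_sup [set ereal_inf [set f t | t in `]0, e[] | e in `]0, +oo[].

Definition delta_c {R : realType} (rho : probability R R) : \bar R :=
  (1 - liminf_at0 (entropy_ratio rho))%E.

(* Main.v *)
Require Import Defs.
From HB Require Import structures.
From mathcomp Require Import all_boot all_order all_algebra.
From mathcomp Require Import all_classical all_reals all_analysis.
From mathcomp Require Import measurable_realfun lra.
Import Order.TTheory GRing.Theory Num.Theory.
Local Open Scope classical_set_scope.
Local Open Scope ring_scope.
Section A.
Variable R : realType.
Local Open Scope ereal_scope.

Lemma meas_pdfT (t : R) : t != 0%R ->
  measurable_fun [set: measurableTypeR R * R]
    (fun xy : measurableTypeR R * R => normal_pdf xy.2 t xy.1).
Proof.
move=> t0.
rewrite (_ : (fun xy : _ * _ => _) = (fun xy : measurableTypeR R * R =>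
   normal_peak t * expR (- (xy.1 - xy.2) ^+ 2 / (t ^+ 2 *+ 2)))%R); last first.
  by apply/funext => xy; rewrite normal_pdfE.
apply: measurable_funM => //.
apply: measurableT_comp => //; apply: measurable_funM => //.
apply: measurableT_comp => //; apply: measurable_funX => //.
apply: measurable_funB; [exact: measurable_fst | exact: measurable_snd].
Qed.

Lemma normal_pdf_sym (y t x : R) : t != 0%R -> normal_pdf y t x = normal_pdf x t y.
Proof.
move=> t0; rewrite !normal_pdfE//.
by rewrite /normal_fun -opprB sqrrN.
Qed.

Variable P : probability R R.

Lemma int_pdf_ge0 (t x : R) : 0 <= \int[P]_y (normal_pdf y t x)%:E.
Proof. by apply: integral_ge0 => y _; rewrite lee_fin normal_pdf_ge0. Qed.

Lemma int_pdf_le (t x : R) : t != 0%R ->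
  \int[P]_y (normal_pdf y t x)%:E <= (normal_peak t)%:E.
Proof.
move=> t0.
apply: (@le_trans _ _ (\int[P]_y (normal_peak t)%:E)).
  apply: ge0_le_integral => //.
  - by move=> y _; rewrite lee_fin normal_pdf_ge0.
  - apply/measurable_EFinP.
    under eq_fun do rewrite normal_pdf_sym//.
    exact: measurable_normal_pdf.
  - by move=> y _; rewrite lee_fin normal_pdf_ub.
by rewrite integral_cst//= probability_setT mule1.
Qed.

Lemma dens_EFin (t x : R) : t != 0%R ->
  (gauss_smooth_density P t x)%:E = \int[P]_y (normal_pdf y t x)%:E.
Proof.
move=> t0; rewrite /gauss_smooth_density fineK// ge0_fin_numE ?int_pdf_ge0//.
by rewrite (le_lt_trans (int_pdf_le _ _ t0))// ltry.
Qed.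

Lemma dens_ge0 (t x : R) : (0 <= gauss_smooth_density P t x)%R.
Proof. by rewrite /gauss_smooth_density fine_ge0// int_pdf_ge0. Qed.

Lemma dens_le (t x : R) : t != 0%R -> (gauss_smooth_density P t x <= normal_peak t)%R.
Proof. by move=> t0; rewrite -lee_fin dens_EFin// int_pdf_le. Qed.

Lemma dens_meas (t : R) : t != 0%R ->
  measurable_fun [set: measurableTypeR R] (gauss_smooth_density P t).
Proof.
move=> t0.
have mf : measurable_fun setT (fun xy : measurableTypeR R * R => (normal_pdf xy.2 t xy.1)%:E).
  by apply/measurable_EFinP; exact: meas_pdfT.
have := @measurable_fun_fubini_tonelli_F _ _ (measurableTypeR R) R R
  P (fun xy => (normal_pdf xy.2 t xy.1)%:E).
move=> /(_ mf).
move=> /(_ (fun xy => normal_pdf_ge0 _ _ _)) mF.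
exact: (measurableT_comp (fine_measurable measurableT) mF).
Qed.

Lemma dens_int (t : R) : t != 0%R ->
  \int[@lebesgue_measure R]_x (gauss_smooth_density P t x)%:E = 1.
Proof.
move=> t0.
under eq_integral do rewrite dens_EFin//.
have mf : measurable_fun setT (fun xy : measurableTypeR R * R => (normal_pdf xy.2 t xy.1)%:E).
  by apply/measurable_EFinP; exact: meas_pdfT.
have := @fubini_tonelli _ _ (measurableTypeR R) R R
  (@lebesgue_measure R) P (fun xy => (normal_pdf xy.2 t xy.1)%:E).
move=> /(_ mf).
move=> /(_ (fun xy => normal_pdf_ge0 _ _ _)).
rewrite /fubini_F /fubini_G /= => ->.
under eq_integral do rewrite integral_normal_pdf.
by rewrite integral_cst//= probability_setT mule1.
Qed.
End A.
Section B.
Variable R : realType.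
Local Open Scope ereal_scope.
Variables (k : nat) (mu : 'I_k -> probability R R) (alpha : 'I_k -> R)
  (rho : probability R R)
  (halpha0 : forall j, (0 <= alpha j)%R)
  (hrho : forall A : set R, measurable A ->
      rho A = (\sum_(j < k) (alpha j)%:E * mu j A)%E).

Let m_ (n : nat) : {measure set R -> \bar R} :=
  match insub n with
  | Some j => mscale (NngNum (halpha0 j)) (mu j)
  | None => mzero
  end.

Lemma mix_integral (f : R -> \bar R) : measurable_fun setT f ->
  (forall x, 0 <= f x) ->
  \int[rho]_y f y = \sum_(j < k) (alpha j)%:E * \int[mu j]_y f y.
Proof.
move=> mf f0.
have m_E (j : 'I_k) : m_ j = mscale (NngNum (halpha0 j)) (mu j).
  by rewrite /m_ valK.
rewrite (eq_measure_integral (msum m_ k)); last first.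
  move=> A mA _; apply: (etrans (hrho A mA)).
  transitivity (\sum_(n < k) m_ n A); last by [].
  by apply: eq_bigr => j _; rewrite m_E.
rewrite ge0_integral_measure_sum//.
apply: eq_bigr => j _; rewrite m_E ge0_integral_mscale//.
Qed.
End B.
Section C.
Variable R : realType.
Variables (k : nat) (a q : 'I_k -> R).
Hypothesis a0 : forall j, 0 <= a j.
Hypothesis q0 : forall j, 0 <= q j.
Hypothesis a1 : \sum_(j < k) a j = 1.
Let p := \sum_(j < k) a j * q j.

Lemma p_ge_term j : a j * q j <= p.
Proof.
rewrite /p (bigD1 j)//= lerDl; apply: sumr_ge0 => i _; exact: mulr_ge0.
Qed.

Lemma p_ge0 : 0 <= p.
Proof. by apply: sumr_ge0 => i _; exact: mulr_ge0. Qed.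

Lemma ln_le_sub1 (u : R) : 0 < u -> ln u <= u - 1.
Proof.
move=> u0; have := @le_ln1Dx R (u - 1).
rewrite addrCA subrr addr0; apply; rewrite ltrBrDl; lra.
Qed.

Lemma jensen_xlnx : p * ln p <= \sum_(j < k) a j * (q j * ln (q j)).
Proof.
have E : p * ln p = \sum_(j < k) a j * (q j * ln p).
  by rewrite /p mulr_suml; apply: eq_bigr => j _; rewrite mulrA.
have E2 : 0 = \sum_(j < k) a j * (q j - p).
  rewrite (eq_bigr (fun j => a j * q j - a j * p)); last by move=> j _; rewrite mulrBr.
  by rewrite sumrB -mulr_suml a1 mul1r /p subrr.
rewrite E -subr_ge0 -sumrB [X in X <= _]E2; apply: ler_sum => j _.
rewrite -mulrBr.
have [a00|apos] := eqVneq (a j) 0; first by rewrite a00 !mul0r.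
apply: ler_wpM2l => //.
have [q00|qpos] := eqVneq (q j) 0.
  by rewrite q00 !mul0r subrr sub0r oppr_le0 p_ge0.
have qp : 0 < q j by rewrite lt_neqAle eq_sym qpos q0.
have ap : 0 < a j by rewrite lt_neqAle eq_sym apos a0.
have pp : 0 < p by apply: lt_le_trans (p_ge_term j); exact: mulr_gt0.
have := @ln_le_sub1 _ (divr_gt0 pp qp).
rewrite ln_div ?posrE// => h.
have := ler_wpM2l (ltW qp) h.
rewrite mulrBr mulrBr mulr1 mulrCA divff ?mulr1; last by rewrite gt_eqF.
move=> h2; rewrite -opprB -[X in _ <= X]opprB lerN2 (le_trans h2)//.
Qed.

Lemma lower_xlnx : \sum_(j < k) a j * (q j * ln (q j)) + \sum_(j < k) a j * (q j * ln (a j))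
   <= p * ln p.
Proof.
have E : p * ln p = \sum_(j < k) a j * (q j * ln p).
  by rewrite /p mulr_suml; apply: eq_bigr => j _; rewrite mulrA.
rewrite E -big_split /=; apply: ler_sum => j _.
have [a00|apos] := eqVneq (a j) 0; first by rewrite a00 !mul0r addr0.
have [q00|qpos] := eqVneq (q j) 0; first by rewrite q00 !(mul0r, mulr0) addr0.
have qp : 0 < q j by rewrite lt_neqAle eq_sym qpos q0.
have ap : 0 < a j by rewrite lt_neqAle eq_sym apos a0.
have pp : 0 < p by apply: lt_le_trans (p_ge_term j); exact: mulr_gt0.
rewrite -mulrDr; apply: ler_wpM2l => //; rewrite -mulrDr; apply: ler_wpM2l; first exact: ltW.
rewrite addrC -lnM ?posrE// ler_ln ?posrE ?mulr_gt0//.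
exact: p_ge_term.
Qed.
End C.
Section D.
Variable R : realType.
Local Open Scope ereal_scope.
Variables (k : nat) (mu : 'I_k -> probability R R) (alpha : 'I_k -> R)
  (rho : probability R R)
  (halpha0 : forall j, (0 <= alpha j)%R)
  (halpha1 : (\sum_(j < k) alpha j = 1)%R)
  (hrho : forall A : set R, measurable A ->
      rho A = (\sum_(j < k) (alpha j)%:E * mu j A)%E).

Notation leb := (@lebesgue_measure R).
Notation gsd := gauss_smooth_density.

Lemma meas_pdf_y (t x : R) : t != 0%R ->
  measurable_fun [set: R] (fun y => (normal_pdf y t x)%:E).
Proof.
move=> t0; apply/measurable_EFinP.
under eq_fun do rewrite normal_pdf_sym//.
exact: measurable_normal_pdf.
Qed.

Lemma dens_mix (t x : R) : t != 0%R ->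
  gsd rho t x = (\sum_(j < k) alpha j * gsd (mu j) t x)%R.
Proof.
move=> t0; apply: EFin_inj.
rewrite dens_EFin// (@mix_integral _ _ _ _ _ halpha0 hrho _ (meas_pdf_y t x t0)); last first.
  by move=> y; rewrite lee_fin normal_pdf_ge0.
rewrite -sumEFin; apply: eq_bigr => j _.
by rewrite EFinM dens_EFin.
Qed.

Lemma meas_xlnx (P : probability R R) (t : R) : t != 0%R ->
  measurable_fun [set: measurableTypeR R]
    (fun x => gsd P t x * ln (gsd P t x))%R.
Proof.
move=> t0; apply: measurable_funM; first exact: dens_meas.
apply: measurableT_comp; first exact: measurable_ln.
exact: dens_meas.
Qed.

Lemma dens_integrable (P : probability R R) (t : R) : t != 0%R ->
  leb.-integrable setT (fun x => (gsd P t x)%:E).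
Proof.
move=> t0; apply/integrableP; split.
  by apply/measurable_EFinP; exact: dens_meas.
under eq_integral do rewrite gee0_abs ?lee_fin ?dens_ge0//.
by rewrite dens_int// ltry.
Qed.

End D.
Section D2.
Variable R : realType.
Local Open Scope ereal_scope.
Variables (k : nat) (mu : 'I_k -> probability R R) (alpha : 'I_k -> R)
  (rho : probability R R)
  (halpha0 : forall j, (0 <= alpha j)%R)
  (halpha1 : (\sum_(j < k) alpha j = 1)%R)
  (hrho : forall A : set R, measurable A ->
      rho A = (\sum_(j < k) (alpha j)%:E * mu j A)%E).

Notation leb := (@lebesgue_measure R).
Notation gsd := gauss_smooth_density.
Definition gfun (P : probability R R) (t x : R) := (gsd P t x * ln (gsd P t x))%R.

Lemma entropy_bounds (t : R) : t != 0%R ->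
  (forall j, leb.-integrable setT (fun x => (gfun (mu j) t x)%:E)) ->
  entropyH (gsd rho t) \is a fin_num /\
  ((\sum_(j < k) alpha j * fine (entropyH (gsd (mu j) t))
     + \sum_(j < k) alpha j * ln (alpha j)
   <= fine (entropyH (gsd rho t)))%R /\
  (fine (entropyH (gsd rho t)) <= \sum_(j < k) alpha j * fine (entropyH (gsd (mu j) t)))%R).
Proof.
move=> t0 intg.
have dm x : gsd rho t x = (\sum_(j < k) alpha j * gsd (mu j) t x)%R.
  exact: (@dens_mix R k mu alpha rho halpha0 hrho t x t0).
set U := fun x => (\sum_(j < k) alpha j * gfun (mu j) t x)%R.
set V := fun x => (\sum_(j < k) (alpha j * ln (alpha j)) * gsd (mu j) t x)%R.
set L := fun x => (U x + V x)%R.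
set f := fun x => gfun rho t x.
have Hfin j : entropyH (gsd (mu j) t) \is a fin_num.
  exact: (integrable_fin_num measurableT (intg j)).
have intU : leb.-integrable setT (fun x => (U x)%:E).
  have := @integrable_sum _ _ _ leb setT measurableT _ (index_enum 'I_k) xpredT
    (fun j x => (alpha j)%:E * (gfun (mu j) t x)%:E)
    (fun j _ => integrableZl measurableT (alpha j) (intg j)).
  apply: eq_integrable => // x _.
  by rewrite sumEFin; congr EFin; apply: eq_bigr => j _.
have intV : leb.-integrable setT (fun x => (V x)%:E).
  have := @integrable_sum _ _ _ leb setT measurableT _ (index_enum 'I_k) xpredT
    (fun j x => (alpha j * ln (alpha j))%:E * (gsd (mu j) t x)%:E)
    (fun j _ => integrableZl measurableT (alpha j * ln (alpha j)) (@dens_integrable R (mu j) t t0)).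
  apply: eq_integrable => // x _.
  by rewrite sumEFin; congr EFin; apply: eq_bigr => j _.
have intL : leb.-integrable setT (fun x => (L x)%:E).
  by apply: eq_integrable (integrableD measurableT intU intV).
have fU x : (f x <= U x)%R.
  rewrite /f /gfun dm /U /gfun.
  exact: (@jensen_xlnx R k alpha (fun j => gsd (mu j) t x) halpha0 (fun j => @dens_ge0 R (mu j) t x) halpha1).
have Lf x : (L x <= f x)%R.
  rewrite /L /f /V /U /gfun dm.
  have -> : (\sum_(j < k) alpha j * ln (alpha j) * gsd (mu j) t x =
     \sum_(j < k) alpha j * (gsd (mu j) t x * ln (alpha j)))%R.
    by apply: eq_bigr => j _; rewrite -mulrA [X in (_ * X)%R]mulrC.
  exact: (@lower_xlnx R k alpha (fun j => gsd (mu j) t x) halpha0 (fun j => @dens_ge0 R (mu j) t x)).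
have mf : measurable_fun setT (fun x => (f x)%:E).
  by apply/measurable_EFinP; exact: (@meas_xlnx R rho t t0).
have intf : leb.-integrable setT (fun x => (f x)%:E).
  apply: (@le_integrable _ _ _ leb setT measurableT _ (fun x => ((`|L x| + `|U x|)%R)%:E) mf).
  - move=> x _; rewrite !abse_EFin lee_fin [X in (_ <= X)%R]ger0_norm ?addr_ge0//.
    have h1 := ler_norm (L x); have h2 := ler_norm (- L x); rewrite normrN in h2.
    have h3 := ler_norm (U x); have h4 := ler_norm (- U x); rewrite normrN in h4.
    have h5 := fU x; have h6 := Lf x.
    rewrite ler_norml; apply/andP; split; lra.
  - have := integrableD measurableT (@integrable_norm _ (measurableTypeR R) R leb setT L intL) (@integrable_norm _ (measurableTypeR R) R leb setT U intU).
    by apply: eq_integrable => // x _.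
have leU : \int[leb]_x (f x)%:E <= \int[leb]_x (U x)%:E.
  by apply: le_integral => // x _; rewrite lee_fin.
have leL : \int[leb]_x (L x)%:E <= \int[leb]_x (f x)%:E.
  by apply: le_integral => // x _; rewrite lee_fin.
have EU : \int[leb]_x (U x)%:E = (\sum_(j < k) alpha j * fine (entropyH (gsd (mu j) t)))%:E.
  rewrite (eq_integral (fun x : measurableTypeR R => \sum_(j < k) (alpha j)%:E * (gfun (mu j) t x)%:E)); last first.
    by move=> x _; rewrite sumEFin; congr EFin; apply: eq_bigr => j _.
  rewrite integral_sum//; last by move=> j; apply: integrableZl.
  rewrite -sumEFin; apply: eq_bigr => j _.
  rewrite integralZl// EFinM fineK//; exact: Hfin.
have EV : \int[leb]_x (V x)%:E = (\sum_(j < k) alpha j * ln (alpha j))%:E.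
  rewrite (eq_integral (fun x : measurableTypeR R => \sum_(j < k) (alpha j * ln (alpha j))%:E * (gsd (mu j) t x)%:E)); last first.
    by move=> x _; rewrite sumEFin; congr EFin; apply: eq_bigr => j _.
  rewrite integral_sum//; last first.
    by move=> j; apply: integrableZl => //; exact: (@dens_integrable R (mu j) t t0).
  rewrite -sumEFin; apply: eq_bigr => j _.
  rewrite integralZl//; last exact: (@dens_integrable R (mu j) t t0).
  by rewrite (@dens_int R (mu j) t t0) mule1.
have EL : \int[leb]_x (L x)%:E = \int[leb]_x (U x)%:E + \int[leb]_x (V x)%:E.
  by rewrite -integralD.
have Hf : entropyH (gsd rho t) = \int[leb]_x (f x)%:E by [].
have finf : entropyH (gsd rho t) \is a fin_num.
  by rewrite Hf; exact: integrable_fin_num.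
split => //; rewrite -!lee_fin fineK// EFinD.
rewrite -EU -EV -EL Hf; split; [exact: leL | exact: leU].
Qed.
End D2.
Section E.
Variable R : realType.
Local Open Scope ereal_scope.

Lemma near_right0 (P : R -> Prop) : (\forall t \near 0%R^'+, P t) ->
  exists2 d : R, (0 < d)%R & forall t, (0 < t < d)%R -> P t.
Proof.
move=> /nbhs_ballP[d /= d0 Hd]; exists d => // t /andP[t0 td].
apply: Hd => //; rewrite /ball /= sub0r normrN gtr0_norm//.
Qed.

Lemma liminf_at0_cvg (f : R -> \bar R) (L : R) :
  f t @[t --> 0%R^'+] --> L%:E -> liminf_at0 f = L%:E.
Proof.
move=> /fine_cvgP[ffin /cvgrPdist_lt fL].
have key (eps : R) : (0 < eps)%R -> exists2 d : R, (0 < d)%R &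
    forall t, (0 < t < d)%R -> f t = (fine (f t))%:E /\ (`|L - fine (f t)| < eps)%R.
  move=> e0; apply: near_right0.
  near=> t; split; last by near: t; exact: fL.
  by rewrite fineK//; near: t; exact: ffin.
apply/eqP; rewrite eq_le; apply/andP; split.
- apply: ge_ereal_sup => _ [e /= e0 <-].
  apply/lee_addgt0Pr => eps eps0.
  have [d d0 Hd] := key eps eps0.
  rewrite in_itv /= andbT in e0.
  pose t := (Num.min e d / 2)%R.
  have t0 : (0 < t)%R by rewrite divr_gt0// lt_min e0 d0.
  have tmin : (t < Num.min e d)%R by rewrite ltr_pdivrMr// ltr_pMr ?lt_min ?e0 ?d0// ltr1n.
  have [te td] : (t < e)%R /\ (t < d)%R.
    by move: tmin; rewrite lt_min => /andP[].
  apply: (@le_trans _ _ (f t)).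
    by apply: ereal_inf_lbound; exists t => //; rewrite /= in_itv /= t0 te.
  have [-> h] := Hd t (introT andP (conj t0 td)).
  rewrite -EFinD lee_fin.
  move: h; rewrite ltr_norml => /andP[h1 h2]; lra.
- apply/lee_addgt0Pr => eps eps0.
  have [d d0 Hd] := key eps eps0.
  rewrite -[L](subrK eps) EFinD; apply: leeD2r.
  apply: (@le_trans _ _ (ereal_inf [set f t | t in `]0%R, d[])).
    apply/ereal_infP => _ [t /= td <-].
    rewrite in_itv /= in td.
    have [-> h] := Hd t td.
    rewrite lee_fin.
    move: h; rewrite ltr_norml => /andP[h1 h2]; lra.
  apply: ereal_sup_ubound; exists d => //.
  by rewrite /= in_itv /= d0.
Unshelve. all: by end_near.
Qed.
End E.
Section F.
Variable R : realType.
Local Open Scope ereal_scope.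

Lemma ln_lt0' (t : R) : (0 < t < 1)%R -> (ln t < 0)%R.
Proof. exact: ln_lt0. Qed.

Lemma invabsln_cvg0 : (`|ln t|^-1)%R @[t --> (0:R)%R^'+] --> (0:R^o)%R.
Proof.
have pos : \forall t \near (0:R)%R^'+, (0 < `|ln t|)%R.
  near=> t; rewrite normr_gt0; apply: ltr0_neq0; apply: ln_lt0'.
  apply/andP; split; first by near: t; exact: nbhs_right_gt.
  by near: t; exact: nbhs_right_lt.
apply/(@gtr0_cvgV0 _ _ _ _ (fun t : R => `|ln t|)%R pos).
apply/cvgryPge => A.
have := @lnNy R; move/cvgrNyPle => /(_ (- A)%R).
apply: filterS => t h.
rewrite -lerN2 opprK in h.
apply: le_trans h _; rewrite -normrN; exact: ler_norm.
Unshelve. all: by end_near.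
Qed.

Lemma ratio_fin (P : probability R R) (t : R) : (0 < t < 1)%R ->
  entropy_ratio P t \is a fin_num ->
  entropyH (gauss_smooth_density P t) \is a fin_num /\
  fine (entropy_ratio P t) = (fine (entropyH (gauss_smooth_density P t)) * `|ln t|^-1)%R.
Proof.
move=> t01; rewrite /entropy_ratio.
have lp : (0 < `|ln t|^-1)%R.
  by rewrite invr_gt0 normr_gt0; apply: ltr0_neq0; apply: ln_lt0'.
case: (entropyH _) => [r| |] /=.
- by move=> _; split.
- by rewrite gt0_mulye// lte_fin.
- by rewrite gt0_mulNye// lte_fin.
Qed.
End F.
Theorem corollary2p3 (R : realType) (k : nat)
  (mu : 'I_k -> probability R R) (alpha : 'I_k -> R)
  (rho : probability R R)
  (hlim : forall j, exists l : R,
      entropy_ratio (mu j) t @[t --> 0^'+] --> l%:E)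
  (halpha0 : forall j, 0 <= alpha j)
  (halpha1 : \sum_(j < k) alpha j = 1)
  (hrho : forall A : set R, measurable A ->
      rho A = (\sum_(j < k) (alpha j)%:E * mu j A)%E) :
  delta_c rho = (\sum_(j < k) (alpha j)%:E * delta_c (mu j))%E.
Proof.
have [l hl] := choice hlim.
set c := \sum_(j < k) alpha j * ln (alpha j).
set L := \sum_(j < k) alpha j * l j.
have hfin j : (\forall t \near (0:R)^'+, entropy_ratio (mu j) t \is a fin_num) /\
    (fine (entropy_ratio (mu j) t) : R^o) @[t --> (0:R)^'+] --> (l j : R^o).
  exact/fine_cvgP.
have near_all : \forall t \near (0:R)^'+, (0 < t < 1) /\
    forall j, entropy_ratio (mu j) t \is a fin_num.
  apply/near_andP; split.
    near=> t; apply/andP; split.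
      by near: t; exact: nbhs_right_gt.
    by near: t; exact: nbhs_right_lt.
  apply: (@filter_forall _ _ (fun j t => entropy_ratio (mu j) t \is a fin_num)) => j.
  exact: (hfin j).1.
have good t : (0 < t < 1) /\ (forall j, entropy_ratio (mu j) t \is a fin_num) ->
   [/\ entropy_ratio rho t \is a fin_num,
    fine (entropy_ratio rho t) <= \sum_(j < k) alpha j * fine (entropy_ratio (mu j) t) &
    \sum_(j < k) alpha j * fine (entropy_ratio (mu j) t) + c * `|ln t|^-1
      <= fine (entropy_ratio rho t)].
  move=> [t01 hj].
  have t0 : t != 0 by case/andP: t01 => /gt_eqF ->.
  have lp : 0 < `|ln t|^-1.
    by rewrite invr_gt0 normr_gt0; apply: ltr0_neq0; apply: ln_lt0'.
  have Hj j := @ratio_fin R (mu j) t t01 (hj j).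
  have intg j : (@lebesgue_measure R).-integrable setT
      (fun x => (@gfun R (mu j) t x)%:E).
    apply/integrableP; split.
      by apply/measurable_EFinP; exact: (@meas_xlnx R (mu j) t t0).
    rewrite integral_fin_num_abs//; first exact: (Hj j).1.
    exact: (@meas_xlnx R (mu j) t t0).
  have [finrho [lo up]] := @entropy_bounds R k mu alpha rho halpha0 halpha1 hrho t t0 intg.
  have finr : entropy_ratio rho t \is a fin_num by rewrite fin_numM.
  have Hr := @ratio_fin R rho t t01 finr.
  have E : \sum_(j < k) alpha j * fine (entropy_ratio (mu j) t) =
      (\sum_(j < k) alpha j * fine (entropyH (gauss_smooth_density (mu j) t))) * `|ln t|^-1.
    rewrite mulr_suml; apply: eq_bigr => j _; rewrite (Hj j).2 mulrA //.
  split => //; rewrite Hr.2 E.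
    by rewrite ler_pM2r.
  by rewrite -mulrDl ler_pM2r.
have conv : entropy_ratio rho t @[t --> 0^'+] --> L%:E.
  apply/fine_cvgP; split.
    by apply: filterS near_all => t /good[].
  have cup : (\sum_(j < k) alpha j * fine (entropy_ratio (mu j) t)) @[t --> 0^'+] --> L.
    apply: cvg_big => //; first exact: add_continuous.
    move=> j _; apply: cvgMl_tmp; exact: (hfin j).2.
  have clo : (\sum_(j < k) alpha j * fine (entropy_ratio (mu j) t) + c * `|ln t|^-1)
      @[t --> 0^'+] --> L.
    have := cvgD cup (@cvgMl_tmp _ _ _ _ _ c _ (@invabsln_cvg0 R)).
    by rewrite mulr0 addr0; apply.
  apply: (squeeze_cvgr _ clo cup).
  by apply: filterS near_all => t /good[_ h1 h2]; rewrite h1 h2.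
have liml j : liminf_at0 (entropy_ratio (mu j)) = (l j)%:E.
  exact: liminf_at0_cvg.
rewrite /delta_c (@liminf_at0_cvg R _ _ conv).
under eq_bigr do rewrite liml.
rewrite (eq_bigr (fun j => (alpha j * (1 - l j))%:E)); last first.
  by move=> j _; rewrite -EFinB -EFinM.
rewrite sumEFin -EFinB; congr EFin.
rewrite (eq_bigr (fun j => alpha j - alpha j * l j)); last by move=> j _; rewrite mulrBr mulr1.
by rewrite sumrB halpha1.
Unshelve. all: by end_near.
Qed.
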